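(* Let $k$ be a field of characteristic $0$, let $B$ be a $\mathbf{GL}$-algebra and let $N$ be a $B$-module. If $N$ is flat over $B$, then $N^{\mathbf{GL}}$ is flat over $B^{\mathbf{GL}}$.
   Context: $\mathbf{GL}=\bigcup_n\mathbf{GL}_n(k)$, standard representation $\mathbf{V}=\bigcup_n k^n$; a polynomial representation is a subquotient of a direct sum of tensor powers of $\mathbf{V}$. A $\mathbf{GL}$-algebra is a commutative unital $k$-algebra with $\mathbf{GL}$-action by algebra automorphisms making it a polynomial representation. A $B$-module means a $B$-module with a compatible $\mathbf{GL}$-action making it a polynomial representation. $(-)^{\mathbf{GL}}$ denotes $\mathbf{GL}$-invariants (equal to the degree-$0$ part of a polynomial representation). *)

(* Defs.v *)
From HB Require Import structures.
From mathcomp Require Import all_boot all_order all_algebra.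
From mathcomp Require Import boolp.

Set Implicit Arguments.
Unset Strict Implicit.
Unset Printing Implicit Defensive.

Import GRing.Theory.
Local Open Scope ring_scope.

(*  A finite formal sum  s = [:: (p_1, m_1); ...]  of elementary tensors     *)
(*  represents  \sum_i p_i (x) m_i  in  P (x)_R M ; it is zero there iff it  *)
(*  is killed by every R-balanced biadditive map (universal property of the  *)
(*  tensor product).  Every element of P (x)_R M is such a sum.             *)

Definition tensor_zero (R : comNzRingType) (P M : lmodType R)
    (s : seq (P * M)) : Prop :=
  forall (G : zmodType) (beta : P -> M -> G),
    (forall p p' m, beta (p + p') m = beta p m + beta p' m) ->
    (forall p m m', beta p (m + m') = beta p m + beta p m') ->
    (forall r p m, beta (r *: p) m = beta p (r *: m)) ->
    \sum_(x <- s) beta x.1 x.2 = 0.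

(* P is flat over R: for every injective R-linear f : M1 -> M2, the map
   1 (x) f : P (x)_R M1 -> P (x)_R M2 is injective. *)
Definition flat (R : comNzRingType) (P : lmodType R) : Prop :=
  forall (M1 M2 : lmodType R) (f : M1 -> M2),
    (forall r x y, f (r *: x + y) = r *: f x + f y) ->
    injective f ->
    forall s : seq (P * M1),
      tensor_zero [seq (x.1, f x.2) | x <- s] -> tensor_zero s.

(*  The group GL = \bigcup_n GL_n(k).  An element A of GL_n(k) is viewed as  *)
(*  the infinite matrix  extmx A  (A in the top-left corner, identity       *)
(*  elsewhere); two invertible matrices of possibly different sizes give   *)
(*  the same element of GL iff their extensions agree.                      *)

Section GL.
Variable k : fieldType.

Definition extmx n (A : 'M[k]_n) : nat -> nat -> k :=
  fun i j => match (insub i : option 'I_n), (insub j : option 'I_n) with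
             | Some i', Some j' => A i' j'
             | _, _ => (i == j)%:R
             end.

Definition GLaction (M : Type) (act : forall n, 'M[k]_n -> M -> M) : Prop :=
  [/\ forall n (x : M), act n 1%:M x = x,
      forall n (A B : 'M[k]_n), A \in unitmx -> B \in unitmx ->
        forall x, act n (A *m B) x = act n A (act n B x) &
      forall n m (A : 'M[k]_n) (A' : 'M[k]_m), A \in unitmx -> A' \in unitmx ->
        extmx A =2 extmx A' -> forall x, act n A x = act m A' x].

(* Direct sums  \bigoplus_{i \in I} T(V)  of copies of the tensor algebra
   T(V) = \bigoplus_d V^{(x) d}, V = \bigcup_n k^n with basis e_0, e_1, ... :
   an element is a finitely supported function  f : I * seq nat -> k,
   f (i, [:: j_1; ...; j_d]) being the coefficient of e_{j_1} (x)...(x) e_{j_d}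
   in the i-th copy. *)
Definition tsum (I : Type) := I * seq nat -> k.

Definition finsupp I (f : tsum I) : Prop :=
  exists L : seq (I * seq nat), forall x, f x != 0 -> exists2 j, (j < size L)%N & x = nth x L j.

(* action of A \in GL_n(k):  (A.f)(i,t) = \sum_s f(i,s) \prod_j A_{t_j s_j};
   only s with size s = size t and entries < n + max t + 1 contribute. *)
Definition tsum_act I n (A : 'M[k]_n) (f : tsum I) : tsum I :=
  fun x => let: (i, t) := x in
    \sum_(s : (size t).-tuple 'I_(n + foldr maxn 0%N t + 1))
      f (i, [seq val j | j <- s]) *
      \prod_(j < size t) extmx A (nth 0%N t j) (val (tnth s j)).

(* M (a k-vector space with scalar multiplication sc, and GL-action act) is a
   polynomial representation: it is a subquotient of a direct sum of tensor
   powers of V, i.e. there is a GL-stable subspace W of such a direct sum and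
   a surjective GL-equivariant k-linear map W -> M. *)
Definition polynomial_rep (M : zmodType) (sc : k -> M -> M)
    (act : forall n, 'M[k]_n -> M -> M) : Prop :=
  exists (I : Type) (W : tsum I -> Prop) (phi : tsum I -> M),
    [/\ (forall f, W f -> finsupp f),
        W (fun _ => 0),
        (forall c f g, W f -> W g -> W (fun x => c * f x + g x)),
        (forall n (A : 'M[k]_n) f, A \in unitmx -> W f -> W (tsum_act A f)) &
     [/\ (forall c f g, W f -> W g ->
            phi (fun x => c * f x + g x) = sc c (phi f) + phi g),
         (forall n (A : 'M[k]_n) f, A \in unitmx -> W f ->
            phi (tsum_act A f) = act n A (phi f)) &
         (forall m, exists2 f, W f & phi f = m)]].

Record GLalg := {
  ga_car :> comAlgType k;
  ga_act : forall n, 'M[k]_n -> ga_car -> ga_car;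
  ga_action : GLaction ga_act;
  ga_morph : forall n (A : 'M[k]_n), A \in unitmx ->
    [/\ ga_act A 1 = 1,
        forall x y, ga_act A (x + y) = ga_act A x + ga_act A y,
        forall x y, ga_act A (x * y) = ga_act A x * ga_act A y &
        forall (c : k) x, ga_act A (c *: x) = c *: ga_act A x];
  ga_poly : polynomial_rep (fun c x => c *: x) ga_act
}.
Arguments ga_act g {n} A x.
Arguments ga_morph g {n A} uA.

Record GLmod (B : GLalg) := {
  gm_car :> lmodType (ga_car B);
  gm_act : forall n, 'M[k]_n -> gm_car -> gm_car;
  gm_action : GLaction gm_act;
  gm_compat : forall n (A : 'M[k]_n), A \in unitmx ->
    (forall x y, gm_act A (x + y) = gm_act A x + gm_act A y) /\
    (forall (b : ga_car B) x, gm_act A (b *: x) = ga_act B A b *: gm_act A x);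
  gm_poly : polynomial_rep (fun c x => (c%:A : ga_car B) *: x) gm_act
}.
Arguments gm_act {B} g {n} A x.
Arguments gm_compat {B} g {n A} uA.

Lemma additive_opp (U V : zmodType) (f : U -> V) :
  (forall x y, f (x + y) = f x + f y) -> forall y, f (- y) = - f y.
Proof.
move=> h y.
have f0 : f 0 = 0.
  by have := h 0 0; rewrite addr0 => /(congr1 (fun z => z - f 0));
     rewrite addrK subrr => ->.
by apply/eqP; rewrite -subr_eq0 opprK -h addNr f0.
Qed.

Lemma additive_0 (U V : zmodType) (f : U -> V) :
  (forall x y, f (x + y) = f x + f y) -> f 0 = 0.
Proof.
by move=> h; have := h 0 0; rewrite addr0 => /(congr1 (fun z => z - f 0));
   rewrite addrK subrr => ->.
Qed.

Section Invariants.
Variable B : GLalg.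

Definition inv_pred : pred (ga_car B) :=
  fun b => `[< forall n (A : 'M[k]_n), A \in unitmx -> ga_act B A b = b >].

Lemma inv_subring_closed : subring_closed inv_pred.
Proof.
split.
- by apply/asboolP=> n A uA; case: (ga_morph B uA).
- move=> x y /asboolP Hx /asboolP Hy; apply/asboolP=> n A uA.
  have [_ hadd _ _] := ga_morph B uA.
  have hopp := additive_opp hadd y.
  by rewrite hadd hopp Hx // Hy.
- move=> x y /asboolP Hx /asboolP Hy; apply/asboolP=> n A uA.
  by have [_ _ hmul _] := ga_morph B uA; rewrite hmul Hx // Hy.
Qed.

HB.instance Definition _ := GRing.isSubringClosed.Build (ga_car B) inv_pred
  inv_subring_closed.

Record invB := InvB { invB_val :> ga_car B; invB_valP : invB_val \in inv_pred }.

HB.instance Definition _ := [isSub for invB_val].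
HB.instance Definition _ := [Choice of invB by <:].
HB.instance Definition _ := [SubChoice_isSubComNzRing of invB by <:].

Variable N : GLmod B.

Definition invN_pred : pred (gm_car N) :=
  fun x => `[< forall n (A : 'M[k]_n), A \in unitmx -> gm_act N A x = x >].

Lemma invN_zmod_closed : zmod_closed invN_pred.
Proof.
split.
- by apply/asboolP=> n A uA; have [hadd _] := gm_compat N uA; rewrite (additive_0 hadd).
- move=> x y /asboolP Hx /asboolP Hy; apply/asboolP=> n A uA.
  have [hadd hsc] := gm_compat N uA.
  have hopp := additive_opp hadd y.
  by rewrite hadd hopp Hx // Hy.
Qed.

HB.instance Definition _ := GRing.isZmodClosed.Build (gm_car N) invN_pred
  invN_zmod_closed.

Record invN := InvN { invN_val :> gm_car N; invN_valP : invN_val \in invN_pred }.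

HB.instance Definition _ := [isSub for invN_val].
HB.instance Definition _ := [Choice of invN by <:].
HB.instance Definition _ := [SubChoice_isSubZmodule of invN by <:].

Lemma invN_scale_subproof (r : invB) (x : invN) :
  ((r : ga_car B) *: (x : gm_car N)) \in invN_pred.
Proof.
apply/asboolP=> n A uA; have [_ hsc] := gm_compat N uA.
rewrite hsc; have /asboolP Hr := invB_valP r; have /asboolP Hx := invN_valP x.
by rewrite Hr // Hx.
Qed.

Definition invN_scale (r : invB) (x : invN) : invN :=
  InvN (invN_scale_subproof r x).

Lemma invN_scalerA a b v :
  invN_scale a (invN_scale b v) = invN_scale (a * b) v.
Proof. by apply: val_inj; rewrite /= scalerA. Qed.

Lemma invN_scale1r : left_id 1 invN_scale.
Proof. by move=> v; apply: val_inj; rewrite /= scale1r. Qed.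

Lemma invN_scalerDr : right_distributive invN_scale +%R.
Proof. by move=> a u v; apply: val_inj; rewrite /= scalerDr. Qed.

Lemma invN_scalerDl v : {morph invN_scale^~ v : a b / a + b}.
Proof. by move=> a b; apply: val_inj; rewrite /= scalerDl. Qed.

HB.instance Definition _ := GRing.Zmodule_isLmodule.Build invB invN
  invN_scalerA invN_scale1r invN_scalerDr invN_scalerDl.

End Invariants.

End GL.

(* Main.v *)
Require Import Defs.
From HB Require Import structures.
From mathcomp Require Import all_boot all_order all_algebra.
From mathcomp Require Import boolp.
Set Implicit Arguments.
Unset Strict Implicit.
Unset Printing Implicit Defensive.
Import GRing.Theory.
Local Open Scope ring_scope.

Section Field.
Variable k : fieldType.
Hypothesis hk : [pchar k] =i pred0.

Lemma natr_neq0 n : (n.+1%:R : k) != 0.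
Proof. by have /pcharf0P -> := hk. Qed.

Lemma interp D j : (j <= D)%N -> exists c : 'I_D.+1 -> k,
  forall d, (d <= D)%N -> \sum_i c i * (i.+1)%:R ^+ d = (d == j)%:R.
Proof.
move=> jD.
pose a : 'rV[k]_D.+1 := \row_i (i.+1)%:R.
pose V := Vandermonde D.+1 a.
have uV : V \in unitmx.
  rewrite unitmxE det_Vandermonde unitfE; apply/prodf_neq0 => i _.
  apply/prodf_neq0 => l ilt; rewrite !mxE -natrB; last by rewrite ltnS ltnW.
  by have /pcharf0P -> := hk; rewrite subn_eq0 -ltnNge ltnS.
exists (fun i => invmx V i (inord j)) => d dD.
have := congr1 (fun M : 'M_D.+1 => M (inord d) (inord j)) (mulmxV uV).
rewrite /= !mxE -val_eqE /= !inordK ?ltnS // => <-; apply: eq_bigr => i _.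
by rewrite /V /Vandermonde !mxE inordK // mulrC.
Qed.

Lemma extmx_scalar n (t : k) a b :
  extmx (t%:M : 'M_n) a b = (a == b)%:R * (if (a < n)%N then t else 1).
Proof.
rewrite /extmx; case: (ltnP a n) => Ha; last first.
  by rewrite insubF ?ltnNge ?Ha // mulr1.
rewrite (insubT (fun x => x < n)%N Ha).
case: (ltnP b n) => Hb; last first.
  rewrite insubF ?ltnNge ?Hb //.
  have -> : (a == b) = false by apply/negbTE; apply: contraTneq Hb => <-; rewrite -ltnNge.
  by rewrite mul0r.
rewrite (insubT (fun x => x < n)%N Hb) !mxE mulr_natl.
by [].
Qed.

Lemma nth_le_max (u : seq nat) j : (nth 0 u j <= foldr maxn 0 u)%N.
Proof.
elim: u j => [|x u IH] [|j] //=; first by rewrite leq_maxl.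
by rewrite (leq_trans (IH j)) // leq_maxr.
Qed.

Lemma tsum_act_scalar I n (t : k) (f : tsum k I) x :
  tsum_act (t%:M : 'M_n) f x =
  f x * \prod_(j < size x.2) (if (nth 0 x.2 j < n)%N then t else 1).
Proof.
case: x => i u /=.
set m := (n + foldr maxn 0 u + 1)%N.
have um : forall j, (nth 0 u j < m)%N.
  by move=> j; rewrite /m addn1 ltnS (leq_trans (nth_le_max u j)) // leq_addl.
pose s0 : (size u).-tuple 'I_m := [tuple Ordinal (um j) | j < size u].
have s0E : [seq val j | j <- s0] = u.
  apply: (@eq_from_nth _ 0); first by rewrite size_map size_tuple.
  move=> j; rewrite size_map size_tuple => ju.
  have x0 : 'I_m by exists 0%N; rewrite /m addn1.
  rewrite (nth_map x0) ?size_tuple //.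
  have -> : nth x0 s0 j = tnth s0 (Ordinal ju) by rewrite (tnth_nth x0).
  by rewrite tnth_mktuple.
rewrite (bigD1 s0) //= s0E [X in _ + X]big1 ?addr0.
  congr (_ * _); apply: eq_bigr => j _.
  by rewrite extmx_scalar tnth_mktuple eqxx mul1r.
move=> s ss0.
have [j Hj] : exists j, tnth s j != tnth s0 j.
  apply/existsP; apply: contraNT ss0; rewrite negb_exists => /forallP H.
  by apply/eqP/eq_from_tnth => j; apply/eqP; have := H j; rewrite negbK.
rewrite (bigD1 j) //= extmx_scalar.
have -> : (nth 0 u j == tnth s j) = false.
  apply/negbTE; apply: contra Hj => /eqP E.
  by rewrite tnth_mktuple; apply/eqP/val_inj; rewrite /= E.
by rewrite !mul0r mulr0.
Qed.


Lemma unit_scalar n (t : k) : t != 0 -> (t%:M : 'M_n) \in unitmx.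
Proof. by move=> t0; rewrite unitmxE det_scalar unitfE expf_neq0. Qed.

Lemma le_max_nth (X : Type) (F : X -> nat) (L : seq X) x0 j :
  (j < size L)%N -> (F (nth x0 L j) <= \max_(y <- L) F y)%N.
Proof.
elim: L j => [|y L IH] [|j] //= jL; rewrite big_cons ?leq_maxl //.
by rewrite (leq_trans (IH j jL)) // leq_maxr.
Qed.

Section Dec.
Variables (V : lmodType k) (act : forall n, 'M[k]_n -> V -> V).

Definition dec (x : V) n0 (s : seq (nat * V)) :=
  forall n, (n0 <= n)%N -> forall t : k, t != 0 ->
    act (t%:M : 'M_n) x = \sum_(p <- s) t ^+ p.1 *: p.2.

Definition pz (s : seq (nat * V)) := \sum_(p <- s | p.1 == 0%N) p.2.

Lemma dec_eval (s : seq (nat * V)) D (c : 'I_D.+1 -> k) :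
  (forall p, p \in s -> (p.1 <= D)%N) ->
  (forall d, (d <= D)%N -> \sum_i c i * (i.+1)%:R ^+ d = (d == 0%N)%:R) ->
  \sum_(i < D.+1) c i *: \sum_(p <- s) ((i.+1)%:R : k) ^+ p.1 *: p.2 = pz s.
Proof.
move=> Hs Hc; rewrite /pz [RHS]big_mkcond.
under [LHS]eq_bigr do rewrite scaler_sumr.
rewrite exchange_big /= [RHS]big_seq [LHS]big_seq; apply: eq_bigr => p ps.
under eq_bigr do rewrite scalerA.
rewrite -scaler_suml Hc ?Hs //.
by case: eqP => _; rewrite ?scale1r ?scale0r.
Qed.

Lemma dec_uniq x n0 n1 s s' : dec x n0 s -> dec x n1 s' -> pz s = pz s'.
Proof.
move=> H H'.
set D := \max_(p <- s ++ s') p.1.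
have [c Hc] := interp (leq0n D).
have bnd : forall p, p \in s ++ s' -> (p.1 <= D)%N.
  by move=> p ps; apply: (leq_bigmax_seq (F := fun p : nat * V => p.1)) ps isT.
have bs : forall p, p \in s -> (p.1 <= D)%N.
  by move=> p ps; apply: bnd; rewrite mem_cat ps.
have bs' : forall p, p \in s' -> (p.1 <= D)%N.
  by move=> p ps; apply: bnd; rewrite mem_cat ps orbT.
rewrite -(dec_eval bs Hc) -(dec_eval bs' Hc).
apply: eq_bigr => i _; congr (_ *: _).
by rewrite -(H (maxn n0 n1)) ?leq_maxl ?natr_neq0 // -(H' (maxn n0 n1)) ?leq_maxr ?natr_neq0.
Qed.

Section WSec.
Variables (I : Type) (W : tsum k I -> Prop) (phi : tsum k I -> V).
Hypotheses (hfs : forall f, W f -> finsupp f) (hW0 : W (fun _ => 0))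
  (hWlin : forall c f g, W f -> W g -> W (fun x => c * f x + g x))
  (hWact : forall n (A : 'M[k]_n) f, A \in unitmx -> W f -> W (tsum_act A f))
  (hphilin : forall c f g, W f -> W g ->
     phi (fun x => c * f x + g x) = c *: phi f + phi g)
  (hphiact : forall n (A : 'M[k]_n) f, A \in unitmx -> W f ->
     phi (tsum_act A f) = act A (phi f)).

Lemma phi0 : phi (fun _ => 0) = 0.
Proof.
have := hphilin 1 hW0 hW0.
have -> : (fun x : I * seq nat => 1 * 0 + 0) = (fun _ => 0 : k).
  by apply: funext => x; rewrite mul1r addr0.
rewrite scale1r => E.
by apply: (addrI (phi (fun _ => 0))); rewrite addr0 -E.
Qed.

Lemma W_sum (X : Type) (r : seq X) (c : X -> k) (g : X -> tsum k I) :
  (forall a, W (g a)) ->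
  W (fun x => \sum_(a <- r) c a * g a x) /\
  phi (fun x => \sum_(a <- r) c a * g a x) = \sum_(a <- r) c a *: phi (g a).
Proof.
move=> Hg; elim: r => [|a r [IHW IHphi]].
  have -> : (fun x => \sum_(a <- [::]) c a * g a x) = (fun _ => 0).
    by apply: funext => x; rewrite big_nil.
  by split; [exact: hW0 | rewrite phi0 big_nil].
have -> : (fun x => \sum_(b <- a :: r) c b * g b x) =
   (fun x => c a * g a x + (fun x => \sum_(b <- r) c b * g b x) x).
  by apply: funext => x; rewrite big_cons.
by split; [exact: hWlin | rewrite hphilin // IHphi big_cons].
Qed.

Definition comp (f : tsum k I) d : tsum k I :=
  fun x => (size x.2 == d)%:R * f x.

Lemma bound (f : tsum k I) : finsupp f -> exists n0 D,
  forall x, f x != 0 -> (size x.2 <= D)%N /\ forall j, (nth 0 x.2 j < n0)%N.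
Proof.
move=> [L HL].
exists (\max_(y <- L) foldr maxn 0 y.2).+1, (\max_(y <- L) size y.2).
move=> x /HL [j jL ->]; split.
  exact: (le_max_nth (fun y : I * seq nat => size y.2)).
move=> j'; rewrite ltnS (leq_trans (nth_le_max _ j')) //.
exact: (le_max_nth (fun y : I * seq nat => foldr maxn 0 y.2)).
Qed.

Lemma act_scalar_f (f : tsum k I) n0 D :
  (forall x, f x != 0 -> (size x.2 <= D)%N /\ forall j, (nth 0 x.2 j < n0)%N) ->
  forall n (t : k), (n0 <= n)%N ->
  tsum_act (t%:M : 'M_n) f = fun x => t ^+ size x.2 * f x.
Proof.
move=> Hb n t Hn; apply: funext => x; rewrite tsum_act_scalar.
have [fx0|/Hb [_ Hj]] := eqVneq (f x) 0; first by rewrite fx0 mul0r mulr0.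
rewrite mulrC; congr (_ * _).
rewrite (eq_bigr (fun=> t)); last by move=> j _; rewrite (leq_trans (Hj j) Hn).
by rewrite prodr_const card_ord.
Qed.

Lemma comp_W f j : W f -> W (comp f j).
Proof.
move=> Wf; have [n0 [D Hb]] := bound (hfs Wf).
case: (leqP j D) => jD; last first.
  have -> : comp f j = (fun _ => 0).
    apply: funext => x; rewrite /comp.
    have [fx0|/Hb [sD _]] := eqVneq (f x) 0; first by rewrite fx0 mulr0.
    rewrite (_ : (size x.2 == j) = false) ?mul0r //.
    by apply/negbTE; apply: contraTneq sD => ->; rewrite -ltnNge.
  exact: hW0.
have [c Hc] := interp jD.
have -> : comp f j = (fun x => \sum_(i <- enum 'I_D.+1)
     c i * tsum_act (((i.+1)%:R : k)%:M : 'M_n0) f x).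
  apply: funext => x; rewrite /comp.
  under eq_bigr do rewrite (act_scalar_f Hb _ (leqnn n0)) mulrA.
  rewrite -mulr_suml.
  have [fx0|/Hb [sD _]] := eqVneq (f x) 0; first by rewrite fx0 !mulr0.
  by rewrite big_enum /= Hc.
apply: (W_sum _ _ _).1 => i.
by apply: hWact => //; rewrite unit_scalar ?natr_neq0.
Qed.

Lemma comp0_inv f n (A : 'M_n) : tsum_act A (comp f 0%N) = comp f 0%N.
Proof.
apply: funext => -[i [|a u]]; rewrite /tsum_act /comp /=.
  rewrite (big_pred1 [tuple]) => [|s]; last by apply/esym/eqP/tuple0.
  by rewrite big_ord0 mulr1.
rewrite big1 ?mul0r // => s _.
by rewrite size_map size_tuple /= !mul0r.
Qed.

Lemma dec_exists_W (x : V) : (exists2 f, W f & phi f = x) ->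
  exists n0 s, dec x n0 s /\
    forall n (A : 'M_n), A \in unitmx -> act A (pz s) = pz s.
Proof.
move=> [f Wf <-].
have [n0 [D Hb]] := bound (hfs Wf).
exists n0, [seq (d, phi (comp f d)) | d <- iota 0 D.+1]; split.
  move=> n Hn t t0; rewrite -hphiact ?unit_scalar // (act_scalar_f Hb t Hn).
  have -> : (fun x => t ^+ size x.2 * f x) =
      (fun x => \sum_(d <- iota 0 D.+1) t ^+ d * comp f d x).
    apply: funext => y; rewrite /comp.
    have [fx0|/Hb [sD _]] := eqVneq (f y) 0.
      by rewrite fx0 mulr0 big1 // => d _; rewrite !mulr0.
    rewrite (bigD1_seq (size y.2)) ?mem_iota ?iota_uniq ?add0n ?ltnS //=.
    rewrite eqxx mul1r big1 ?addr0 // => d /negbTE.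
    by rewrite eq_sym => ->; rewrite mul0r mulr0.
  rewrite big_map; exact: (W_sum _ _ (fun d => comp_W d Wf)).2.
move=> n A uA.
have -> : pz [seq (d, phi (comp f d)) | d <- iota 0 D.+1] = phi (comp f 0%N).
  rewrite /pz big_map /= big_cons /= big_seq_cond big1 ?addr0 // => d.
  by rewrite mem_iota => /andP [/andP [d1 _] /eqP d0]; rewrite d0 in d1.
rewrite -hphiact; [by rewrite comp0_inv | by [] | exact: comp_W].
Qed.
End WSec.

Section Pi.
Hypothesis hpoly : polynomial_rep (fun c (x : V) => c *: x) act.

Lemma dec_exists (x : V) : exists n0 s, dec x n0 s /\
    forall n (A : 'M_n), A \in unitmx -> act A (pz s) = pz s.
Proof.
have [I [W [phi [hfs hW0 hWlin hWact [hphilin hphiact hsurj]]]]] := hpoly.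
exact: (dec_exists_W hfs hW0 hWlin hWact hphilin hphiact (hsurj x)).
Qed.

Lemma dec_ex (x : V) : exists s, exists n0, dec x n0 s.
Proof. by have [n0 [s [H _]]] := dec_exists x; exists s, n0. Qed.

Definition pi0 (x : V) : V := pz (proj1_sig (cid (dec_ex x))).

Lemma pi0E x n0 s : dec x n0 s -> pi0 x = pz s.
Proof. by rewrite /pi0; case: cid => /= s' [n1 H'] H; exact: dec_uniq H' H. Qed.

Lemma pi0_inv x n (A : 'M_n) : A \in unitmx -> act A (pi0 x) = pi0 x.
Proof. by have [n0 [s [H Hi]]] := dec_exists x; rewrite (pi0E H); apply: Hi. Qed.

Lemma pi0_id x : (forall n (A : 'M_n), A \in unitmx -> act A x = x) -> pi0 x = x.
Proof.
move=> Hx; have H : dec x 0 [:: (0%N, x)].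
  move=> n _ t t0; rewrite Hx ?unit_scalar //.
  by rewrite big_cons big_nil expr0 scale1r addr0.
by rewrite (pi0E H) /pz big_cons /= big_nil addr0.
Qed.

Hypothesis hadd : forall n (A : 'M_n), A \in unitmx ->
  forall x y, act A (x + y) = act A x + act A y.

Lemma pi0_add x y : pi0 (x + y) = pi0 x + pi0 y.
Proof.
have [n0 [s [H _]]] := dec_exists x; have [n1 [s' [H' _]]] := dec_exists y.
have Hxy : dec (x + y) (maxn n0 n1) (s ++ s').
  move=> n Hn t t0; rewrite hadd ?unit_scalar // big_cat /=.
  by rewrite H ?H' // (leq_trans _ Hn) // ?leq_maxl ?leq_maxr.
by rewrite (pi0E Hxy) (pi0E H) (pi0E H') /pz big_cat.
Qed.
End Pi.
End Dec.

Section BN.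
Variables (B : GLalg k) (N : GLmod B).
Definition actB : forall n, 'M[k]_n -> ga_car B -> ga_car B := @ga_act k B.

Lemma dec_mul (x y : ga_car B) n0 n1 s s' :
  dec actB x n0 s -> dec actB y n1 s' ->
  dec actB (x * y) (maxn n0 n1)
    [seq (addn p.1 q.1, p.2 * q.2) | p <- s, q <- s'].
Proof.
move=> H H' n Hn t t0; have [_ _ hmul _] := ga_morph B (unit_scalar n t0).
rewrite /actB hmul -/actB H ?H' ?(leq_trans _ Hn) ?leq_maxl ?leq_maxr //.
rewrite big_allpairs_dep mulr_suml; apply: eq_bigr => p _.
rewrite mulr_sumr; apply: eq_bigr => q _ /=.
by rewrite -scalerAl -scalerAr scalerA exprD.
Qed.

Lemma pz_mul (s s' : seq (nat * ga_car B)) :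
  pz [seq (addn p.1 q.1, p.2 * q.2) | p <- s, q <- s'] = pz s * pz s'.
Proof.
rewrite /pz [LHS]big_mkcond big_allpairs_dep /= mulr_suml [RHS]big_mkcond.
apply: eq_bigr => p _; case: (p.1 =P 0%N) => [p0|pn0].
  rewrite mulr_sumr [RHS]big_mkcond; apply: eq_bigr => q _.
  by rewrite p0 add0n; case: ifP; rewrite ?mulr0.
rewrite big1 // => q _; rewrite addn_eq0.
by case: (p.1 =P 0%N) pn0.
Qed.

Definition Nk : Type := gm_car N.
HB.instance Definition _ := GRing.Zmodule.on Nk.
Definition nkscale (c : k) (x : Nk) : Nk := ((c%:A : ga_car B) *: (x : gm_car N)).

Lemma algM' (a b : k) : ((a * b)%:A : ga_car B) = a%:A * b%:A.
Proof. by rewrite mulr_algl scalerA. Qed.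

Lemma aux_alg (a b : k) (x : ga_car B) : a *: x * b%:A = (a * b)%:A * x.
Proof. by rewrite mulr_algl -scalerAl [x * _]mulrC mulr_algl scalerA. Qed.

Lemma nk_A a b (v : Nk) : nkscale a (nkscale b v) = nkscale (a * b) v.
Proof. by rewrite /nkscale scalerA algM'. Qed.
Lemma nk_1 : left_id 1 nkscale.
Proof. by move=> v; rewrite /nkscale scale1r scale1r. Qed.
Lemma nk_Dr : right_distributive nkscale +%R.
Proof. by move=> a u v; rewrite /nkscale scalerDr. Qed.
Lemma nk_Dl v : {morph nkscale^~ v : a b / a + b}.
Proof. by move=> a b; rewrite /nkscale scalerDl scalerDl. Qed.

HB.instance Definition _ :=
  GRing.Zmodule_isLmodule.Build k Nk nk_A nk_1 nk_Dr nk_Dl.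

Lemma nkE (c : k) (v : Nk) : (c *: v : Nk) = ((c%:A : ga_car B) *: (v : gm_car N) : gm_car N).
Proof. reflexivity. Qed.
Definition actN : forall n, 'M[k]_n -> Nk -> Nk := @gm_act k B N.

Lemma polyN : polynomial_rep (fun c (x : Nk) => c *: x) actN.
Proof. exact: gm_poly N. Qed.

Lemma dec_scale (b : ga_car B) (x : Nk) n0 n1 s (s' : seq (nat * Nk)) :
  dec actB b n0 s -> dec actN x n1 s' ->
  dec actN ((b *: (x : gm_car N)) : Nk) (maxn n0 n1)
    [seq (addn p.1 q.1, (p.2 *: (q.2 : gm_car N)) : Nk) | p <- s, q <- s'].
Proof.
move=> H H' n Hn t t0; have [_ hsc] := gm_compat N (unit_scalar n t0).
have Hb := H n (leq_trans (leq_maxl _ _) Hn) t t0.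
have Hx := H' n (leq_trans (leq_maxr _ _) Hn) t t0.
rewrite /actB in Hb; rewrite /actN in Hx *.
have E : forall (r : seq (nat * Nk)) (F : nat * Nk -> k),
    (\sum_(p <- r) F p *: p.2 : Nk) =
    (\sum_(p <- r) ((F p)%:A : ga_car B) *: (p.2 : gm_car N) : gm_car N).
  by move=> r F; reflexivity.
rewrite hsc Hb Hx !E.
rewrite big_allpairs_dep scaler_suml; apply: eq_bigr => p _.
rewrite scaler_sumr; apply: eq_bigr => q _ /=.
rewrite [RHS]nkE.
rewrite !scalerA.
rewrite aux_alg -exprD.
reflexivity.
Qed.

Lemma pz_scale (s : seq (nat * ga_car B)) (s' : seq (nat * Nk)) :
  pz [seq (addn p.1 q.1, (p.2 *: (q.2 : gm_car N)) : Nk) | p <- s, q <- s'] =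
  ((pz s) *: (pz s' : gm_car N) : Nk).
Proof.
have E : forall r : seq (nat * Nk),
    (\sum_(p <- r | p.1 == 0%N) p.2 : Nk) =
    (\sum_(p <- r | p.1 == 0%N) (p.2 : gm_car N) : gm_car N).
  by move=> r; reflexivity.
rewrite /pz [LHS]big_mkcond big_allpairs_dep /= E scaler_suml [RHS]big_mkcond.
apply: eq_bigr => p _; case: (p.1 =P 0%N) => [p0|pn0].
  rewrite scaler_sumr [RHS]big_mkcond; apply: eq_bigr => q _.
  by rewrite p0 add0n; case: ifP; rewrite ?scaler0.
rewrite big1 // => q _; rewrite addn_eq0.
by case: (p.1 =P 0%N) pn0.
Qed.

End BN.
End Field.

Section Main.
Variables (k : fieldType) (B : GLalg k) (N : GLmod B).
Variable piB : ga_car B -> invB B.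
Variable piN : gm_car N -> invN N.
Hypothesis piB_id : forall r : invB B, piB (val r) = r.
Hypothesis piB_add : forall x y, piB (x + y) = piB x + piB y.
Hypothesis piB_mul : forall x y, piB (x * y) = piB x * piB y.
Hypothesis piN_id : forall r : invN N, piN (val r) = r.
Hypothesis piN_add : forall x y, piN (x + y) = piN x + piN y.
Hypothesis piN_scale : forall b x, piN (b *: x) = piB b *: piN x.

Definition pimod (M : lmodType (invB B)) : Type := M.
HB.instance Definition _ (M : lmodType (invB B)) := GRing.Zmodule.on (pimod M).
Definition pscale (M : lmodType (invB B)) (b : ga_car B) (m : pimod M) : pimod M :=
  (piB b) *: (m : M).

Lemma piB_1 : piB 1 = 1.
Proof. by have := piB_id 1. Qed.

Section PM.
Variable M : lmodType (invB B).
Lemma ps_A a b (v : pimod M) : pscale a (pscale b v) = pscale (a * b) v.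
Proof. by rewrite /pscale piB_mul scalerA. Qed.
Lemma ps_1 : left_id 1 (@pscale M).
Proof. by move=> v; rewrite /pscale piB_1 scale1r. Qed.
Lemma ps_Dr : right_distributive (@pscale M) +%R.
Proof. by move=> a u v; rewrite /pscale scalerDr. Qed.
Lemma ps_Dl v : {morph (@pscale M)^~ v : a b / a + b}.
Proof. by move=> a b; rewrite /pscale piB_add scalerDl. Qed.
End PM.

HB.instance Definition _ (M : lmodType (invB B)) :=
  GRing.Zmodule_isLmodule.Build (ga_car B) (pimod M) (@ps_A M) (@ps_1 M) (@ps_Dr M) (@ps_Dl M).

Lemma main_red : flat (gm_car N) -> flat (invN N).
Proof.
move=> flN M1 M2 f flin finj s Hs.
have := @flN (pimod M1) (pimod M2) f _ finj [seq (val x.1, x.2 : pimod M1) | x <- s].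
have flin' : forall (r : ga_car B) (x y : pimod M1),
    f (pscale r x + y) = pscale r (f x) + f y.
  by move=> r x y; exact: flin.
move=> /(_ flin') H.
have {H} H : tensor_zero [seq (val x.1, x.2 : pimod M1) | x <- s].
  apply: H => G beta b1 b2 b3.
  rewrite -map_comp.
  pose gamma := fun (n : invN N) (m : M2) => beta (val n) m.
  rewrite big_map; have := Hs G gamma; rewrite big_map; apply.
  - by move=> p p' m; rewrite /gamma /= b1.
  - by move=> p m m'; rewrite /gamma b2.
  - move=> r p m; rewrite /gamma /=.
    have := b3 (val r) (val p) m.
    by rewrite /GRing.scale /= /pscale piB_id.
move=> G alpha a1 a2 a3.
pose beta := fun (n : gm_car N) (m : pimod M1) => alpha (piN n) m.
have := H G beta; rewrite big_map /beta /=.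
under eq_bigr do rewrite piN_id.
apply.
- by move=> p p' m; rewrite /beta piN_add a1.
- by move=> p m m'; rewrite /beta a2.
- by move=> r p m; rewrite /beta piN_scale a3.
Qed.
End Main.

Section Final.
Variables (k : fieldType) (hk : [pchar k] =i pred0) (B : GLalg k) (N : GLmod B).

Definition polyB : polynomial_rep (fun c (x : ga_car B) => c *: x) (@actB k B) := ga_poly B.

Definition piBv (x : ga_car B) : ga_car B := @pi0 k hk _ _ polyB x.

Lemma piB_mem x : piBv x \in @inv_pred k B.
Proof. by apply/asboolP => n A uA; exact: (@pi0_inv k hk _ _ polyB). Qed.

Definition piB x : invB B := InvB (piB_mem x).

Definition piNv (x : gm_car N) : gm_car N := @pi0 k hk (@Nk k B N) (@actN k B N) (@polyN k B N) x.

Lemma piN_mem x : piNv x \in @invN_pred k B N.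
Proof. by apply/asboolP => n A uA; exact: (@pi0_inv k hk _ _ (@polyN k B N)). Qed.

Definition piN x : invN N := InvN (piN_mem x).

Lemma piB_idL (r : invB B) : piB (val r) = r.
Proof.
apply: val_inj => /=; apply: (@pi0_id k hk _ _ polyB) => n A uA.
by have /asboolP := invB_valP r; apply.
Qed.

Lemma piB_addL x y : piB (x + y) = piB x + piB y.
Proof.
apply: val_inj => /=; apply: (@pi0_add k hk _ _ polyB) => n A uA u v.
by have [_ h _ _] := ga_morph B uA.
Qed.

Lemma piB_mulL x y : piB (x * y) = piB x * piB y.
Proof.
apply: val_inj => /=.
have [n0 [s [H _]]] := @dec_exists k hk _ _ polyB x.
have [n1 [s' [H' _]]] := @dec_exists k hk _ _ polyB y.
rewrite /piBv (@pi0E k hk _ _ polyB _ _ _ (dec_mul H H')).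
by rewrite (@pi0E k hk _ _ polyB _ _ _ H) (@pi0E k hk _ _ polyB _ _ _ H') pz_mul.
Qed.

Lemma piN_idL (r : invN N) : piN (val r) = r.
Proof.
apply: val_inj => /=; apply: (@pi0_id k hk _ _ (@polyN k B N)) => n A uA.
by have /asboolP := invN_valP r; apply.
Qed.

Lemma piN_addL x y : piN (x + y) = piN x + piN y.
Proof.
apply: val_inj => /=; apply: (@pi0_add k hk _ _ (@polyN k B N)) => n A uA u v.
by have [h _] := gm_compat N uA.
Qed.

Lemma piN_scaleL b x : piN (b *: x) = piB b *: piN x.
Proof.
apply: val_inj; change (piNv (b *: x) = piBv b *: piNv x).
have [n0 [s [H _]]] := @dec_exists k hk _ _ polyB b.
have [n1 [s' [H' _]]] := @dec_exists k hk _ _ (@polyN k B N) x.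
rewrite /piNv /piBv (@pi0E k hk _ _ (@polyN k B N) _ _ _ (dec_scale H H')).
by rewrite (@pi0E k hk _ _ polyB _ _ _ H) (@pi0E k hk _ _ (@polyN k B N) _ _ _ H') pz_scale.
Qed.
End Final.

Theorem lemma6p11 (k : fieldType) (hk : [pchar k] =i pred0)
    (B : GLalg k) (N : GLmod B) :
  flat (gm_car N) -> flat (invN N).
Proof.
exact: (@main_red k B N (@piB k hk B) (@piN k hk B N) (@piB_idL k hk B)
  (@piB_addL k hk B) (@piB_mulL k hk B) (@piN_idL k hk B N) (@piN_addL k hk B N)
  (@piN_scaleL k hk B N)).
Qed.
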